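(* Consider any sequences evolved by Algorithm 1 and let $d_0:=\|x^*-x^0\|$. Then: (a) for all $k\ge1$ and $x\in\mathcal H$, $A_k[h(y^k)-h(x)]+\frac{1-\sigma^2}{2}\sum_{j=1}^k\frac{A_j}{\lambda_j}\|y^j-\tilde x^{j-1}\|^2+\sum_{j=1}^k\frac{\mu(1+\mu A_{j-1})\lambda_jA_{j-1}}{2a_j}\|x^{j-1}-y^{j-1}\|^2+\frac{1+\mu A_k}{2}\|x-x^k\|^2\le\frac12\|x-x^0\|^2$; (b) if $\sigma<1$, then for all $k\ge1$, $\sum_{j=1}^k\frac{A_j}{\lambda_j}\|y^j-\tilde x^{j-1}\|^2\le\frac{d_0^2}{1-\sigma^2}$.
   Context: Setting: $\mathcal H$ is a finite-dimensional real inner product space with inner product $\langle\cdot,\cdot\rangle$ and norm $\|\cdot\|$. $f,g:\mathcal H\to(-\infty,\infty]$ are proper, closed, convex functions, $h:=f+g$ has nonempty domain, and $g$ is $\mu$-strongly convex for some $\mu>0$, i.e. $g(tx+(1-t)y)\le tg(x)+(1-t)g(y)-\frac{\mu}{2}t(1-t)\|x-y\|^2$ for all $x,y\in\mathcal H$, $t\in[0,1]$. $x^*$ denotes the unique minimizer of $h$. For $\varepsilon\ge 0$, $\partial_\varepsilon f(y):=\{u\in\mathcal H: f(w)\ge f(y)+\langle u,w-y\rangle-\varepsilon\ \forall w\in\mathcal H\}$, and $\partial g:=\partial_0 g$. Algorithm 1: Choose $x^0,y^0\in\mathcal H$ and $\sigma\in[0,1]$, and set $A_0=0$. For $k=0,1,2,\dots$: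 choose $\lambda_{k+1}>0$, set $a_{k+1}=\frac{(1+2\mu A_k)\lambda_{k+1}+\sqrt{(1+2\mu A_k)^2\lambda_{k+1}^2+4(1+\mu A_k)A_k\lambda_{k+1}}}{2}$ and $\tilde x^k=\frac{a_{k+1}-\mu A_k\lambda_{k+1}}{A_k+a_{k+1}}x^k+\frac{A_k+\mu A_k\lambda_{k+1}}{A_k+a_{k+1}}y^k$; compute $(y^{k+1},v^{k+1},\varepsilon_{k+1})\in\mathcal H\times\mathcal H\times[0,\infty)$ such that $v^{k+1}\in\partial_{\varepsilon_{k+1}}f(y^{k+1})+\partial g(y^{k+1})$ and $\frac{\|\lambda_{k+1}v^{k+1}+y^{k+1}-\tilde x^k\|^2}{1+\lambda_{k+1}\mu}+2\lambda_{k+1}\varepsilon_{k+1}\le\sigma^2\|y^{k+1}-\tilde x^k\|^2$; then set $A_{k+1}=A_k+a_{k+1}$ and $x^{k+1}=\frac{1+\mu A_k}{1+\mu A_{k+1}}x^k+\frac{\mu a_{k+1}}{1+\mu A_{k+1}}y^{k+1}-\frac{a_{k+1}}{1+\mu A_{k+1}}v^{k+1}$. ''Sequences evolved by Algorithm 1'' means any sequences satisfying all these relations for every $k\ge 0$. *)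

(* Defs.v *)
From HB Require Import structures.
From mathcomp Require Import all_boot all_order all_algebra.
From mathcomp Require Import all_classical all_reals all_analysis.
From mathcomp Require Import matrix_topology.
Import numFieldTopology.Exports numFieldNormedType.Exports.
Set Implicit Arguments. Unset Strict Implicit. Unset Printing Implicit Defensive.
Import Order.TTheory GRing.Theory Num.Theory.
Local Open Scope ring_scope.

(* The finite-dimensional real inner product space H is modelled as
   'rV[R]_n (n arbitrary) with the Euclidean inner product; every
   finite-dimensional real inner product space is isometric to such a space. *)
Definition ip {R : realType} {n : nat} (u v : 'rV[R]_n) : R :=
  \sum_(i < n) u ord0 i * v ord0 i.
Definition nrm {R : realType} {n : nat} (u : 'rV[R]_n) : R := Num.sqrt (ip u u).

Local Open Scope ereal_scope.

Definition proper_fun {R : realType} {n : nat} (f : 'rV[R]_n -> \bar R) : Prop :=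
  (forall x, f x != -oo) /\ (exists x, f x \is a fin_num).

Definition convex_fun {R : realType} {n : nat} (f : 'rV[R]_n -> \bar R) : Prop :=
  forall (x y : 'rV[R]_n) (t : R), (0 <= t <= 1)%R ->
    f (t *: x + (1 - t) *: y)%R <= t%:E * f x + (1 - t)%:E * f y.

Definition strongly_convex {R : realType} {n : nat} (mu : R)
    (g : 'rV[R]_n -> \bar R) : Prop :=
  forall (x y : 'rV[R]_n) (t : R), (0 <= t <= 1)%R ->
    g (t *: x + (1 - t) *: y)%R <=
      t%:E * g x + (1 - t)%:E * g y - (mu / 2 * t * (1 - t) * nrm (x - y) ^+ 2)%:E.

Definition closed_fun {R : realType} {n : nat} (f : 'rV[R]_n -> \bar R) : Prop :=
  lower_semicontinuous f.

Definition eps_subdiff {R : realType} {n : nat} (f : 'rV[R]_n -> \bar R)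
    (eps : R) (y u : 'rV[R]_n) : Prop :=
  forall w : 'rV[R]_n, f w >= f y + (ip u (w - y) - eps)%:E.

Definition in_sum_subdiff {R : realType} {n : nat} (f g : 'rV[R]_n -> \bar R)
    (eps : R) (y v : 'rV[R]_n) : Prop :=
  exists u1 u2, eps_subdiff f eps y u1 /\ eps_subdiff g 0 y u2 /\ v = (u1 + u2)%R.

Local Close Scope ereal_scope.

Definition algorithm1 {R : realType} {n : nat} (f g : 'rV[R]_n -> \bar R)
    (mu sigma : R) (x y xt v : nat -> 'rV[R]_n) (eps lam a A : nat -> R) : Prop :=
  0 <= sigma <= 1 /\ A 0%N = 0 /\
  forall k : nat,
    0 < lam k.+1 /\
    [/\ a k.+1 = ((1 + 2 * mu * A k) * lam k.+1 +
                  Num.sqrt ((1 + 2 * mu * A k) ^+ 2 * lam k.+1 ^+ 2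
                            + 4 * (1 + mu * A k) * A k * lam k.+1)) / 2,
        xt k = ((a k.+1 - mu * A k * lam k.+1) / (A k + a k.+1)) *: x k
             + ((A k + mu * A k * lam k.+1) / (A k + a k.+1)) *: y k,
        [/\ in_sum_subdiff f g (eps k.+1) (y k.+1) (v k.+1),
            0 <= eps k.+1 &
            nrm (lam k.+1 *: v k.+1 + y k.+1 - xt k) ^+ 2 / (1 + lam k.+1 * mu)
              + 2 * lam k.+1 * eps k.+1 <= sigma ^+ 2 * nrm (y k.+1 - xt k) ^+ 2],
        A k.+1 = A k + a k.+1 &
        x k.+1 = ((1 + mu * A k) / (1 + mu * A k.+1)) *: x k
               + (mu * a k.+1 / (1 + mu * A k.+1)) *: y k.+1
               - (a k.+1 / (1 + mu * A k.+1)) *: v k.+1].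

(* Main.v *)
Require Import Defs.
From HB Require Import structures.
From mathcomp Require Import all_boot all_order all_algebra.
From mathcomp Require Import all_classical all_reals all_analysis.
From mathcomp Require Import ring lra.
Import numFieldTopology.Exports numFieldNormedType.Exports.
Import Order.TTheory GRing.Theory Num.Theory.
Local Open Scope ring_scope.
Section L.
Variables (R : realType) (n : nat).
Implicit Types (u w : 'rV[R]_n).
Lemma ip_ge0 u : 0 <= ip u u.
Proof. by apply: sumr_ge0 => i _; rewrite -expr2 sqr_ge0. Qed.

Lemma nrm2 u : nrm u ^+ 2 = ip u u.
Proof. by rewrite /nrm sqr_sqrtr // ip_ge0. Qed.

Lemma ipDl u1 u2 w : ip (u1 + u2) w = ip u1 w + ip u2 w.
Proof. by rewrite /ip -big_split /=; apply: eq_bigr => i _; rewrite !mxE mulrDl. Qed.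

Lemma ipZr u t w : ip u (t *: w) = t * ip u w.
Proof. by rewrite /ip mulr_sumr; apply: eq_bigr => i _; rewrite !mxE mulrCA. Qed.

Lemma limit_aux (X c : R) : 0 <= c -> (forall t, 0 < t <= 1 -> c * (1 - t) <= X) -> c <= X.
Proof.
move=> hc h; rewrite leNgt; apply/negP => hX.
have h1 := h 1; rewrite subrr mulr0 lexx ltr01 in h1; have {}h1 := h1 isT.
have hc0 : 0 < c by lra.
have ht : 0 < (c - X) / (2 * c) <= 1.
  apply/andP; split; first by apply: divr_gt0; lra.
  by rewrite ler_pdivrMr ?mul1r; lra.
have := h _ ht.
have -> : c * (1 - (c - X) / (2 * c)) = (c + X) / 2 by field; rewrite gt_eqF.
lra.
Qed.

Lemma fin_sub (f : 'rV[R]_n -> \bar R) e y u :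
  proper_fun f -> eps_subdiff f e y u -> f y \is a fin_num.
Proof.
case=> hni [w0 hw0] hs; move: (hni y) (hs w0).
case: (f y) => [r| |] //= _.
rewrite addye // leye_eq => /eqP h.
by rewrite h in hw0.
Qed.

Lemma strong_sub (g : 'rV[R]_n -> \bar R) mu y u w : 0 < mu ->
  proper_fun g -> strongly_convex mu g -> eps_subdiff g 0 y u ->
  g w \is a fin_num ->
  fine (g y) + ip u (w - y) + mu / 2 * nrm (w - y) ^+ 2 <= fine (g w).
Proof.
move=> hmu hp hsc hs hw.
have hy := @fin_sub g _ _ _ hp hs.
set Gy := fine (g y); set Gw := fine (g w); set N := nrm (w - y).
suff : mu / 2 * N ^+ 2 <= Gw - Gy - ip u (w - y) by lra.
apply: limit_aux.
  by apply: mulr_ge0; [apply: divr_ge0; lra| apply: sqr_ge0].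
move=> t /andP[t0 t1].
have := hsc w y t; rewrite ltW //= t1 => /(_ isT) h1.
have := hs (t *: w + (1 - t) *: y) => h2.
have hd : t *: w + (1 - t) *: y - y = t *: (w - y).
  by apply/rowP => i; rewrite !mxE; ring.
rewrite hd ipZr subr0 in h2.
rewrite -(fineK hw) -(fineK hy) -/Gw -/Gy -!EFinM -!EFinD in h1.
rewrite -(fineK hy) -/Gy -EFinD in h2.
have := le_trans h2 h1; rewrite lee_fin -/N => h3.
have h4 : 0 <= t * ((Gw - Gy - ip u (w - y)) - mu / 2 * N ^+ 2 * (1 - t)) by lra.
move: h4; rewrite pmulr_rge0 //; lra.
Qed.

Lemma lower_model (f g : 'rV[R]_n -> \bar R) mu e yt v w : 0 < mu ->
  proper_fun f -> proper_fun g -> strongly_convex mu g ->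
  in_sum_subdiff f g e yt v -> (f w + g w)%E \is a fin_num ->
  fine (f yt + g yt)%E + ip v (w - yt) - e + mu / 2 * nrm (w - yt) ^+ 2
    <= fine (f w + g w)%E.
Proof.
move=> hmu hpf hpg hsc [u1 [u2 [h1 [h2 ->]]]].
rewrite fin_numD => /andP[fw gw].
have fy := @fin_sub f _ _ _ hpf h1.
have gy := @fin_sub g _ _ _ hpg h2.
have := @strong_sub g mu _ _ _ hmu hpg hsc h2 gw.
have := h1 w; rewrite -(fineK fw) -(fineK fy) -EFinD lee_fin => h3.
rewrite !fineD // ipDl; lra.
Qed.

End L.
Lemma key_id (R : realType) (n : nat) (mu A a lam : R) (x y yt v z xt xn : 'rV[R]_n) :
  0 < lam -> 0 < a -> 0 <= A -> 0 < mu ->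
  a ^+ 2 = lam * (a * (1 + 2 * mu * A) + (1 + mu * A) * A) ->
  xt = ((a - mu * A * lam) / (A + a)) *: x + ((A + mu * A * lam) / (A + a)) *: y ->
  xn = ((1 + mu * A) / (1 + mu * (A + a))) *: x + (mu * a / (1 + mu * (A + a))) *: yt
       - (a / (1 + mu * (A + a))) *: v ->
  (- A) * ip v (y - yt) + (- a) * ip v (z - yt)
  + ((A + a) / (2 * lam)) * ip (yt - xt) (yt - xt)
  + (- ((A + a) / (2 * lam * (1 + lam * mu)))) * ip (lam *: v + yt - xt) (lam *: v + yt - xt)
  + (- (mu * A / 2)) * ip (y - yt) (y - yt)
  + (- (mu * a / 2)) * ip (z - yt) (z - yt)
  + (mu * (1 + mu * A) * lam * A / (2 * a)) * ip (x - y) (x - y)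
  + ((1 + mu * (A + a)) / 2) * ip (z - xn) (z - xn)
  + (- ((1 + mu * A) / 2)) * ip (z - x) (z - x) = 0.
Proof.
move=> hl ha hA hm hrel -> ->.
have hD : 0 < a * (1 + 2 * mu * A) + (1 + mu * A) * A.
  have h1 : 0 <= mu * A by apply: mulr_ge0; lra.
  have h2 : 0 <= (1 + mu * A) * A by apply: mulr_ge0; lra.
  have h3 : 0 < a * (1 + 2 * mu * A) by apply: mulr_gt0; lra.
  lra.
have hlam : lam = a ^+ 2 / (a * (1 + 2 * mu * A) + (1 + mu * A) * A).
  by rewrite hrel mulrK // unitfE gt_eqF.
rewrite /ip !mulr_sumr -!big_split /=.
rewrite big1 // => i _; rewrite !mxE.
rewrite hlam.
field.
have h4 : 0 < a ^+ 2 * mu by apply: mulr_gt0 => //; apply: exprn_gt0.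
have h5 : 0 < mu * (A + a) by apply: mulr_gt0 => //; lra.
by rewrite !gt_eqF //=; lra.
Qed.
Lemma step_arith {R : realType} {Ak ak lk sg mu ek Hy Hyt Hz S1 S2 Zx Zn N0 Pxy Rr M Py Pz ipvy ipvz : R} :
  0 < lk ->
  Ak * (Hy - Hz) + ((1 - sg ^+ 2) / 2 * S1 + S2 + (1 + mu * Ak) / 2 * Zx) <= 1 / 2 * N0 ->
  Ak * (Hyt + ipvy - ek + mu / 2 * Py) <= Ak * Hy ->
  ak * (Hyt + ipvz - ek + mu / 2 * Pz) <= ak * Hz ->
  (Ak + ak) * ek <= (Ak + ak) / (2 * lk) * sg ^+ 2 * Rr - (Ak + ak) / (2 * lk * (1 + lk * mu)) * M ->
  (- Ak) * ipvy + (- ak) * ipvz + ((Ak + ak) / (2 * lk)) * Rr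
  + (- ((Ak + ak) / (2 * lk * (1 + lk * mu)))) * M
  + (- (mu * Ak / 2)) * Py + (- (mu * ak / 2)) * Pz
  + (mu * (1 + mu * Ak) * lk * Ak / (2 * ak)) * Pxy
  + ((1 + mu * (Ak + ak)) / 2) * Zn + (- ((1 + mu * Ak) / 2)) * Zx = 0 ->
  (Ak + ak) * (Hyt - Hz) + ((1 - sg ^+ 2) / 2 * (S1 + (Ak + ak) / lk * Rr)
   + (S2 + mu * (1 + mu * Ak) * lk * Ak / (2 * ak) * Pxy)
   + (1 + mu * (Ak + ak)) / 2 * Zn) <= 1 / 2 * N0.
Proof.
move=> hl IH L1 L2 E K.
have -> : (Ak + ak) / lk = 2 * ((Ak + ak) / (2 * lk)) by field; rewrite gt_eqF.
move: IH L1 L2 E K.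
move: ((Ak + ak) / (2 * lk)) ((Ak + ak) / (2 * lk * (1 + lk * mu)))
  (mu * (1 + mu * Ak) * lk * Ak / (2 * ak)) => c1 c2 c3.
move=> IH L1 L2 E K.
nra.
Qed.

Theorem proposition2p4 (R : realType) (n : nat) (f g : 'rV[R]_n -> \bar R) (mu : R)
  (hf_proper : proper_fun f) (hf_closed : closed_fun f) (hf_convex : convex_fun f)
  (hg_proper : proper_fun g) (hg_closed : closed_fun g) (hg_convex : convex_fun g)
  (hmu : 0 < mu) (hg_strong : strongly_convex mu g)
  (hdom : exists x, (f x + g x)%E \is a fin_num)
  (xstar : 'rV[R]_n) (hxstar : forall x, (f xstar + g xstar <= f x + g x)%E)
  (sigma : R) (x y xt v : nat -> 'rV[R]_n) (eps lam a A : nat -> R)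
  (halg : algorithm1 f g mu sigma x y xt v eps lam a A) :
  (forall (k : nat) (z : 'rV[R]_n), (1 <= k)%N ->
     ((A k)%:E * ((f (y k) + g (y k)) - (f z + g z)) +
      ((1 - sigma ^+ 2) / 2 *
         (\sum_(1 <= j < k.+1) A j / lam j * nrm (y j - xt j.-1) ^+ 2)
       + \sum_(1 <= j < k.+1)
           mu * (1 + mu * A j.-1) * lam j * A j.-1 / (2 * a j)
             * nrm (x j.-1 - y j.-1) ^+ 2
       + (1 + mu * A k) / 2 * nrm (z - x k) ^+ 2)%:E
      <= (1 / 2 * nrm (z - x 0%N) ^+ 2)%:E)%E)
  /\
  (sigma < 1 -> forall k : nat, (1 <= k)%N ->
     \sum_(1 <= j < k.+1) A j / lam j * nrm (y j - xt j.-1) ^+ 2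
       <= nrm (xstar - x 0%N) ^+ 2 / (1 - sigma ^+ 2)).
Proof.
case: halg => hsig [hA0 hk].
have ha_facts : forall k, 0 <= A k -> 0 < a k.+1 /\
    a k.+1 ^+ 2 = lam k.+1 * (a k.+1 * (1 + 2 * mu * A k) + (1 + mu * A k) * A k).
  move=> k hA; have [hl [ha _ _ _ _]] := hk k.
  have hb : 0 < (1 + 2 * mu * A k) * lam k.+1.
    apply: mulr_gt0 => //; have : 0 <= mu * A k by apply: mulr_ge0; lra.
    lra.
  have hS : 0 <= (1 + 2 * mu * A k) ^+ 2 * lam k.+1 ^+ 2
                 + 4 * (1 + mu * A k) * A k * lam k.+1.
    apply: addr_ge0; first by apply: mulr_ge0; apply: sqr_ge0.
    apply: mulr_ge0 => //; last by lra.
    apply: mulr_ge0 => //; apply: mulr_ge0; first by lra.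
    have : 0 <= mu * A k by apply: mulr_ge0; lra.
    lra.
  have hs2 := sqr_sqrtr hS.
  have hs0 := sqrtr_ge0 ((1 + 2 * mu * A k) ^+ 2 * lam k.+1 ^+ 2
                 + 4 * (1 + mu * A k) * A k * lam k.+1).
  rewrite ha; split; first by apply: divr_gt0; lra.
  lra.
have hA : forall k, 0 <= A k.
  elim=> [|k ih]; first by rewrite hA0.
  have [_ [_ _ _ -> _]] := hk k; have hh := (ha_facts k ih).1; lra.
have finy : forall k, (f (y k.+1) + g (y k.+1))%E \is a fin_num.
  move=> k; have [_ [_ _ [hsub _ _] _ _]] := hk k.
  case: hsub => u1 [u2 [h1 [h2 _]]].
  by rewrite fin_numD (@fin_sub _ _ f _ _ _ hf_proper h1) (@fin_sub _ _ g _ _ _ hg_proper h2).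
have main : forall k z, (f z + g z)%E \is a fin_num ->
  A k * (fine (f (y k) + g (y k))%E - fine (f z + g z)%E) +
  ((1 - sigma ^+ 2) / 2 * (\sum_(1 <= j < k.+1) A j / lam j * nrm (y j - xt j.-1) ^+ 2)
   + \sum_(1 <= j < k.+1) mu * (1 + mu * A j.-1) * lam j * A j.-1 / (2 * a j)
       * nrm (x j.-1 - y j.-1) ^+ 2
   + (1 + mu * A k) / 2 * nrm (z - x k) ^+ 2) <= 1 / 2 * nrm (z - x 0%N) ^+ 2.
  move=> k z hz; elim: k => [|k IH].
    rewrite hA0 !big_geq //; lra.
  rewrite !(big_nat_recr k.+1) //=.
  have [hl [haeq hxt [hsub he0 hpe] hAeq hxeq]] := hk k.
  have [ha hrel] := ha_facts k (hA k).
  have L2 := @lower_model _ _ f g mu _ _ _ z hmu hf_proper hg_proper hg_strong hsub hz.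
  have {}L2 := ler_wpM2l (ltW ha) L2.
  have L1 : A k * (fine (f (y k.+1) + g (y k.+1))%E + ip (v k.+1) (y k - y k.+1)
      - eps k.+1 + mu / 2 * nrm (y k - y k.+1) ^+ 2) <= A k * fine (f (y k) + g (y k))%E.
    destruct k as [|k'].
      by rewrite hA0 !mul0r.
    apply: ler_wpM2l; first exact: hA.
    exact: (@lower_model _ _ f g mu _ _ _ _ hmu hf_proper hg_proper hg_strong hsub (finy k')).
  have hc0 : 0 < A k + a k.+1 by have hh := hA k; clear -hh ha; lra.
  have hlm : 0 < 1 + lam k.+1 * mu.
    have hh : 0 < lam k.+1 * mu by apply: mulr_gt0.
    clear -hh; lra.
  have E : (A k + a k.+1) * eps k.+1 <=
      (A k + a k.+1) / (2 * lam k.+1) * sigma ^+ 2 * nrm (y k.+1 - xt k) ^+ 2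
      - (A k + a k.+1) / (2 * lam k.+1 * (1 + lam k.+1 * mu))
        * nrm (lam k.+1 *: v k.+1 + y k.+1 - xt k) ^+ 2.
    have hcc : 0 <= (A k + a k.+1) / (2 * lam k.+1).
      by apply: divr_ge0; [exact: ltW| apply: mulr_ge0 => //; exact: ltW].
    have h := ler_wpM2l hcc hpe.
    rewrite mulrDr in h.
    have e1 : (A k + a k.+1) / (2 * lam k.+1) *
        (nrm (lam k.+1 *: v k.+1 + y k.+1 - xt k) ^+ 2 / (1 + lam k.+1 * mu)) =
        (A k + a k.+1) / (2 * lam k.+1 * (1 + lam k.+1 * mu))
        * nrm (lam k.+1 *: v k.+1 + y k.+1 - xt k) ^+ 2.
      by field; rewrite !gt_eqF.
    have e2 : (A k + a k.+1) / (2 * lam k.+1) * (2 * lam k.+1 * eps k.+1) =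
       (A k + a k.+1) * eps k.+1 by field; rewrite gt_eqF.
    have e3 : (A k + a k.+1) / (2 * lam k.+1) * (sigma ^+ 2 * nrm (y k.+1 - xt k) ^+ 2)
       = (A k + a k.+1) / (2 * lam k.+1) * sigma ^+ 2 * nrm (y k.+1 - xt k) ^+ 2.
      by rewrite mulrA.
    rewrite e1 e2 e3 in h; clear -h; lra.
  rewrite hAeq in hxeq.
  have K := @key_id _ _ mu (A k) (a k.+1) (lam k.+1) (x k) (y k) (y k.+1) (v k.+1) z
     (xt k) (x k.+1) hl ha (hA k) hmu hrel hxt hxeq.
  rewrite -!nrm2 in K.
  rewrite hAeq.
  exact: (step_arith hl IH L1 L2 E K).
have Apos : forall k, (1 <= k)%N -> 0 < A k.
  case=> // k _; have [_ [_ _ _ -> _]] := hk k.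
  have h1 := hA k; have h2 := (ha_facts k h1).1.
  clear -h1 h2; lra.
split.
  move=> k z hk1.
  have hy : (f (y k) + g (y k))%E \is a fin_num by case: k hk1 => // k _; exact: finy.
  case hz : ((f z + g z)%E \is a fin_num).
    rewrite -(fineK hy) -(fineK hz) -EFinB -EFinM -EFinD lee_fin.
    exact: main.
  have hzy : (f z + g z = +oo)%E.
    move: hz (hf_proper.1 z) (hg_proper.1 z).
    case: (f z) => [r| |]; case: (g z) => [s| |] //=.
  rewrite hzy -(fineK hy) /= gt0_muleNy ?lte_fin ?Apos // addNye leNye.
  done.
move=> hs1 k hk1.
have hy : (f (y k) + g (y k))%E \is a fin_num by case: k hk1 => // k _; exact: finy.
have hx : (f xstar + g xstar)%E \is a fin_num.
  case: hdom => x0 hx0; have hle := hxstar x0.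
  move: hle hx0 (hf_proper.1 xstar) (hg_proper.1 xstar).
  case: (f x0 + g x0)%E => [e| |] //; case: (f xstar) => [r| |] //; case: (g xstar) => [s| |] //.
have M := main k xstar hx.
have h1 : fine (f xstar + g xstar)%E <= fine (f (y k) + g (y k))%E.
  exact: fine_le.
have h2 : 0 <= \sum_(1 <= j < k.+1) mu * (1 + mu * A j.-1) * lam j * A j.-1 / (2 * a j)
       * nrm (x j.-1 - y j.-1) ^+ 2.
  rewrite big_nat_cond; apply: sumr_ge0 => j /andP[/andP[hj _] _].
  case: j hj => // j _ /=.
  have [hl _] := hk j; have [ha _] := ha_facts j (hA j).
  apply: mulr_ge0; last exact: sqr_ge0.
  apply: divr_ge0; last by apply: mulr_ge0 => //; exact: ltW.
  apply: mulr_ge0; last exact: hA.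
  apply: mulr_ge0; last exact: ltW.
  apply: mulr_ge0; first exact: ltW.
  by apply: addr_ge0; [exact: ler01| apply: mulr_ge0; [exact: ltW| exact: hA]].
have h3 : 0 <= (1 + mu * A k) / 2 * nrm (xstar - x k) ^+ 2.
  apply: mulr_ge0; last exact: sqr_ge0.
  apply: divr_ge0; last exact: ler0n.
  by apply: addr_ge0; [exact: ler01| apply: mulr_ge0; [exact: ltW| exact: hA]].
have h4 : 0 <= A k * (fine (f (y k) + g (y k))%E - fine (f xstar + g xstar)%E).
  by apply: mulr_ge0; [exact: hA| rewrite subr_ge0].
have hs : 0 < 1 - sigma ^+ 2.
  move/andP: hsig => [hs0 _]; clear -hs0 hs1; nra.
rewrite ler_pdivlMr //.
move: M h2 h3 h4 hs.
move: (\sum_(1 <= j < k.+1) A j / lam j * nrm (y j - xt j.-1) ^+ 2) => S1.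
move: (\sum_(1 <= j < k.+1) mu * (1 + mu * A j.-1) * lam j * A j.-1 / (2 * a j)
       * nrm (x j.-1 - y j.-1) ^+ 2) => S2.
move: (A k * (fine (f (y k) + g (y k))%E - fine (f xstar + g xstar)%E)) => T.
move: ((1 + mu * A k) / 2 * nrm (xstar - x k) ^+ 2) => U.
move: (nrm (xstar - x 0%N) ^+ 2) => N0.
clear; move=> M h2 h3 h4 hs; nra.
Qed.
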